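(* Let $A$ be a $3\times3$ skew-symmetric integer matrix whose associated quiver is connected, and let $g\in\mathbb{Z}^3$ be nonzero with $Ag=0$. The graded cluster algebra $\mathcal{A}((x_1,x_2,x_3),A,g)$ has infinitely many occurring degrees if and only if $A$ is mutation-infinite.
   Context: Matrix mutation: $\mu_k(B)=(b'_{ij})$ with $b'_{ij}=-b_{ij}$ if $i=k$ or $j=k$, $b'_{ij}=b_{ij}+\operatorname{sgn}(b_{ik})\max(b_{ik}b_{kj},0)$ otherwise; $B$ is mutation-infinite if infinitely many distinct matrices are obtained from it by finite sequences of mutations. The quiver of $B$ has $b_{ij}$ arrows $i\to j$ when $b_{ij}>0$. A seed $((x_1,x_2,x_3),B)$ mutates in direction $k$ to $(x',\mu_k B)$ with $x'_j=x_j$ ($j\ne k$), $x'_k=\big(\prod_{b_{ik}>0}x_i^{b_{ik}}+\prod_{b_{ik}<0}x_i^{-b_{ik}}\big)/x_k$. Cluster variables are all entries of reachable clusters; grading $\deg x_i=g_i$, and under mutation at $k$ the degree vector becomes $g'$ with $g'_j=g_j$ ($j\ne k$), $g'_k=-g_k+\sum_{b_{ik}>0}b_{ik}g_i$; cluster variables are homogeneous. A degree occurs if some cluster variable has it. *)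

(* Defs.v *)
From mathcomp Require Import all_boot all_order all_algebra.
Set Implicit Arguments. Unset Strict Implicit. Unset Printing Implicit Defensive.
Import Order.TTheory GRing.Theory Num.Theory.
Local Open Scope ring_scope.

Notation exmx := 'M[int]_3.
Notation degvec := 'cV[int]_3.

Definition mutmx (k : 'I_3) (B : exmx) : exmx :=
  \matrix_(i, j)
    if (i == k) || (j == k) then - B i j
    else B i j + sgz (B i k) * Num.max (B i k * B k j) 0.

(* Mutation of the degree vector at k, computed with the current matrix B:
   g'_k = -g_k + sum_{b_ik > 0} b_ik g_i, other entries unchanged. *)
Definition mutdeg (k : 'I_3) (B : exmx) (g : degvec) : degvec :=
  \col_j (if j == k then - g k 0 + \sum_(i < 3 | 0 < B i k) B i k * g i 0
          else g j 0).

(* Mutation of a graded seed (matrix, degree vector); the cluster itself is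
   not needed to track degrees. *)
Definition mutseed (k : 'I_3) (s : exmx * degvec) : exmx * degvec :=
  (mutmx k s.1, mutdeg k s.1 s.2).

Definition mutseq (ks : seq 'I_3) (s : exmx * degvec) : exmx * degvec :=
  foldl (fun s k => mutseed k s) s ks.

Definition mutmxseq (ks : seq 'I_3) (B : exmx) : exmx :=
  foldl (fun B k => mutmx k B) B ks.

Definition skew_symmetric (A : exmx) : Prop := A^T = - A.

Definition quiver_connected (A : exmx) : Prop :=
  forall i j : 'I_3, connect [rel a b | (A a b != 0) || (A b a != 0)] i j.

Definition mutation_infinite (B : exmx) : Prop :=
  ~ exists l : seq exmx, forall ks : seq 'I_3, mutmxseq ks B \in l.

(* d is a degree occurring in the graded cluster algebra A((x1,x2,x3),B,g):
   some cluster variable (an entry of a reachable graded seed) has degree d *)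
Definition occurs_degree (B : exmx) (g : degvec) (d : int) : Prop :=
  exists (ks : seq 'I_3) (i : 'I_3), (mutseq ks (B, g)).2 i 0 = d.

Definition infinitely_many_degrees (B : exmx) (g : degvec) : Prop :=
  ~ exists l : seq int, forall d, occurs_degree B g d -> d \in l.

(* Main.v *)
Require Import Defs.
From mathcomp Require Import all_boot all_order all_algebra zify.
Set Implicit Arguments. Unset Strict Implicit. Unset Printing Implicit Defensive.
Import Order.TTheory GRing.Theory Num.Theory.
Local Open Scope ring_scope.

Definition mf (a b c : int) (i j : nat) : int :=
 match i, j with 0,1 => a | 0,2 => b | 1,0 => -a | 1,2 => c | 2,0 => -b | 2,1 => -c | _,_ => 0 end%N.
Definition M3 a b c : exmx := \matrix_(i,j) mf a b c i j.
Definition wv (B : exmx) : degvec :=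
  \col_(i < 3) (if nat_of_ord i == 0%N then B (inord 1) (inord 2) else if nat_of_ord i == 1%N then - B (inord 0) (inord 2) else B (inord 0) (inord 1)).

Ltac splitifs := repeat match goal with |- context[if ?c then _ else _] => case: (boolP c) => ? end.

Lemma key a b c k : mutdeg k (M3 a b c) (wv (M3 a b c)) = - wv (mutmx k (M3 a b c)).
Proof.
apply/matrixP => i j; rewrite !mxE.
rewrite big_mkcond /= !big_ord_recl big_ord0 /=.
rewrite !mxE -!val_eqE /= !inordK //.
case: k => [[|[|[|k]]] Hk] //; case: i => [[|[|[|i]]] Hi] //=.
all: rewrite /sgz /Order.max /=; splitifs; nia.
Qed.

Lemma skew_anti B i j : skew_symmetric B -> B j i = - B i j.
Proof. by move=> sk; move/matrixP: sk => /(_ i j); rewrite !mxE. Qed.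

Lemma skew_diag B i : skew_symmetric B -> B i i = 0.
Proof. move=> sk; have := skew_anti i i sk; lia. Qed.

Lemma skewE B : skew_symmetric B ->
  B = M3 (B (inord 0) (inord 1)) (B (inord 0) (inord 2)) (B (inord 1) (inord 2)).
Proof.
move=> sk; apply/matrixP => i j; rewrite mxE.
case: i => [[|[|[|i]]] Hi] //; case: j => [[|[|[|j]]] Hj] //=.
all: try (rewrite (_ : Ordinal Hj = Ordinal Hi); [by rewrite skew_diag | exact: val_inj]).
all: try (rewrite skew_anti //; congr (- _)).
all: by f_equal; apply: val_inj; rewrite /= inordK.
Qed.

Lemma skew_mut B k : skew_symmetric B -> skew_symmetric (mutmx k B).
Proof.
move=> sk; rewrite (skewE sk); set a := B _ _; set b := B _ _; set c := B _ _.
apply/matrixP => i j; rewrite !mxE -!val_eqE.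
case: k => [[|[|[|k]]] Hk] //; case: i => [[|[|[|i]]] Hi] //; case: j => [[|[|[|j]]] Hj] //=.
all: rewrite /sgz /Order.max /=; splitifs; nia.
Qed.

Lemma mutdegZ k B s g : mutdeg k B (s *: g) = s *: mutdeg k B g.
Proof.
apply/matrixP => i j; rewrite !mxE; case: ifP => _.
  rewrite mulrDr mulrN mulr_sumr; congr (_ + _); apply: eq_bigr => r _.
  by rewrite ?mxE mulrCA.
by [].
Qed.

Lemma invar ks : forall B g d s, skew_symmetric B -> d *: g = s *: wv B ->
  (mutseq ks (B,g)).1 = mutmxseq ks B /\ skew_symmetric (mutmxseq ks B) /\
  exists s', (s' = s \/ s' = -s) /\ d *: (mutseq ks (B,g)).2 = s' *: wv (mutmxseq ks B).
Proof.
elim: ks => [|k ks IH] B g d s sk e /=.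
  by split => //; split => //; exists s; split => //; left.
have e' : d *: mutdeg k B g = (- s) *: wv (mutmx k B).
  rewrite -mutdegZ e mutdegZ.
  have := key (B (inord 0) (inord 1)) (B (inord 0) (inord 2)) (B (inord 1) (inord 2)) k.
  by rewrite -(skewE sk) => ->; rewrite scalerN scaleNr.
have [H1 [H2 [s' [Hs' H3]]]] := IH _ _ _ _ (skew_mut k sk) e'.
split => //; split => //; exists s'; split => //.
by case: Hs' => ->; [right | left; rewrite opprK].
Qed.

Lemma o1 : (inord 1 : 'I_3) = lift ord0 ord0. Proof. by apply: val_inj; rewrite /= inordK. Qed.
Lemma o2 : (inord 2 : 'I_3) = lift ord0 (lift ord0 ord0). Proof. by apply: val_inj; rewrite /= inordK. Qed.
Lemma o0 : (inord 0 : 'I_3) = ord0. Proof. by apply: val_inj; rewrite /= inordK. Qed.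
Lemma oo0 (H : (0 < 3)%N) : Ordinal H = ord0. Proof. exact: val_inj. Qed.
Lemma oo1 (H : (1 < 3)%N) : Ordinal H = lift ord0 ord0. Proof. exact: val_inj. Qed.
Lemma oo2 (H : (2 < 3)%N) : Ordinal H = lift ord0 (lift ord0 ord0). Proof. exact: val_inj. Qed.

Lemma ker_par a b c (G : 'cV[int]_3) : M3 a b c *m G = 0 ->
  forall i i0, wv (M3 a b c) i0 0 * G i 0 = G i0 0 * wv (M3 a b c) i 0.
Proof.
move=> H i i0.
have E r : (M3 a b c *m G) r 0 = 0 by rewrite H mxE.
have e0 := E ord0; have e1 := E (lift ord0 ord0); have e2 := E (lift ord0 (lift ord0 ord0)).
move: e0 e1 e2; rewrite !mxE !big_ord_recl !big_ord0 /= ?mxE /= => e0 e1 e2.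
rewrite !inordK //.
case: i => [[|[|[|i]]] Hi] //; case: i0 => [[|[|[|i0]]] Hi0] //=;
  rewrite ?oo0 ?oo1 ?oo2; nia.
Qed.

Theorem mainTheorem11 (A : 'M[int]_3) (g : 'cV[int]_3) :
  skew_symmetric A -> quiver_connected A -> g != 0 -> A *m g = 0 ->
  (infinitely_many_degrees A g <-> mutation_infinite A).
Proof.
move=> sk conn gn0 Ag.
case: (boolP [exists i : 'I_3, wv A i 0 != 0]); last first.
  move=> /existsPn Hw; exfalso.
  move: (Hw (inord 0)); rewrite !mxE inordK //= negbK => h0.
  move: (Hw (inord 1)); rewrite !mxE inordK //= negbK => h1.
  move: (Hw (inord 2)); rewrite !mxE inordK //= negbK => h2.
  have A0 : forall x y, A x y = 0.
    rewrite (skewE sk) => x y; rewrite mxE.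
    move/eqP: h0 => ->; move: h1; rewrite oppr_eq0 => /eqP ->; move/eqP: h2 => ->.
    by case: x => [[|[|[|x]]] Hx] //; case: y => [[|[|[|y]]] Hy].
  have := conn ord0 (inord 1).
  case/connectP => p; case: p => [|z p] /=; last by rewrite !A0 eqxx.
  by move=> _ /(congr1 val) /=; rewrite inordK.
case/existsP => i0 Hd.
set d := wv A i0 0; set m := g i0 0.
have KP := @ker_par (A (inord 0) (inord 1)) (A (inord 0) (inord 2)) (A (inord 1) (inord 2)) g.
rewrite -(skewE sk) in KP; have {}KP := KP Ag.
have edg : d *: g = m *: wv A.
  by apply/matrixP => i j; rewrite (ord1 j) [(d *: g) _ _]mxE [(m *: wv A) _ _]mxE /d /m KP.
have mn0 : m != 0.
  apply: contraNneq gn0 => m0; apply/eqP/matrixP => i j.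
  move/matrixP: edg => /(_ i j); rewrite !mxE m0 mul0r => /eqP.
  by rewrite mulf_eq0 (negbTE Hd) /= => /eqP.
have INV := fun ks => @invar ks A g d m sk edg.
split.
- move=> Hinf [l Hl]; apply: Hinf.
  exists ([seq divz (m * wv B i 0) d | B <- l, i <- enum 'I_3] ++
          [seq divz (- m * wv B i 0) d | B <- l, i <- enum 'I_3]).
  move=> x [ks [i <-]].
  have [H1 [H2 [s [Hs H3]]]] := INV ks.
  move/matrixP: H3 => /(_ i 0); rewrite [(d *: (mutseq ks (A, g)).2) _ _]mxE [(s *: wv _) _ _]mxE => H3.
  have -> : (mutseq ks (A, g)).2 i 0 = divz (s * wv (mutmxseq ks A) i 0) d by rewrite -H3 mulKz.
  rewrite mem_cat; apply/orP; case: Hs => ->; [left | right];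
    by apply: (allpairs_f (fun B i => divz (_ * wv B i 0) d)); rewrite ?mem_enum ?Hl.
- move=> Hmi [l Hl]; apply: Hmi.
  pose E := [seq divz (d * x) s | x <- l, s <- [:: m; - m]].
  pose E2 := E ++ map -%R E.
  exists [seq M3 p.1 p.2 c | p <- [seq (a, b) | a <- E2, b <- E2], c <- E2].
  move=> ks.
  have [H1 [H2 [s [Hs H3]]]] := INV ks.
  have sn0 : s != 0 by case: Hs => ->; rewrite ?oppr_eq0.
  have WE : forall i, wv (mutmxseq ks A) i 0 \in E.
    move=> i; move/matrixP: H3 => /(_ i 0); rewrite [(d *: (mutseq ks (A, g)).2) _ _]mxE [(s *: wv _) _ _]mxE => H3.
    have -> : wv (mutmxseq ks A) i 0 = divz (d * (mutseq ks (A, g)).2 i 0) s by rewrite H3 mulKz.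
    apply: (allpairs_f (fun x s => divz (d * x) s)).
      by apply: Hl; exists ks, i.
    by case: Hs => ->; rewrite !inE eqxx ?orbT.
  have W0 := WE (inord 0); have W1 := WE (inord 1); have W2 := WE (inord 2).
  rewrite !mxE !inordK //= in W0 W1 W2.
  rewrite (skewE H2).
  apply: (@allpairs_f _ _ _ (fun p c => M3 p.1 p.2 c) _ _ (_, _) _); last by rewrite mem_cat W0.
  apply: (allpairs_f (fun a b => (a, b))); first by rewrite mem_cat W2.
  by rewrite mem_cat; apply/orP; right; rewrite -[X in X \in _]opprK map_f.
Qed.
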